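(* Let $K\geq 1$ and let $r_{ij}\geq 0$, $i,j\in\{1,2,3,4\}$, be real numbers such that $r_{ij}=r_{ji}$ and $r_{ij}\leq K(r_{ik}+r_{jk})$ for all $i,j,k\in\{1,2,3,4\}$. Then $$\sqrt{r_{12}r_{34}}\leq K\big(\sqrt{r_{13}r_{24}}+\sqrt{r_{14}r_{23}}\big).$$ In particular, $$r_{12}r_{34}\leq 2K^2(r_{13}r_{24}+r_{14}r_{23})\leq (2K)^2\max\{r_{13}r_{24},\ r_{14}r_{23}\}.$$ *)

(* Defs.v *)
From Stdlib Require Import Reals.
Open Scope R_scope.

Definition idx4 (i : nat) : Prop := (1 <= i <= 4)%nat.

(* Main.v *)
Require Import Defs.
From Stdlib Require Import Reals Lra Lia Psatz.
Open Scope R_scope.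

Lemma sq_le (x y : R) : 0 <= x -> 0 <= y -> x * x <= y * y -> x <= y.
Proof. intros; nra. Qed.

Lemma core (c d e f p q : R) : 0 <= c -> 0 <= d -> 0 <= e -> 0 <= f ->
  0 <= p -> 0 <= q -> p * p = c * d -> q * q = e * f ->
  c + f <= d + e -> c + e <= d + f -> (c + f) * (c + e) <= (p + q) * (p + q).
Proof.
  intros hc hd he hf hp hq Hp Hq H1 H2.
  assert (hcd : c <= d) by lra.
  destruct (Rle_dec (c * e) (d * f)) as [H|H].
  - assert (c * e <= p * q).
    { apply sq_le; try nra.
      replace (p * q * (p * q)) with ((p*p)*(q*q)) by ring. rewrite Hp, Hq.
      replace (c*d*(e*f)) with ((c*e)*(d*f)) by ring.
      apply Rmult_le_compat_l; nra. }
    nra.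
  - assert (hcf : c * f <= d * e).
    { destruct (Rle_dec (c * f) (d * e)) as [h|h]; auto.
      exfalso. assert (c*e*(c*f) >= d*f*(d*e)) by nra.
      assert (c*c*(e*f) <= d*d*(e*f)) by (apply Rmult_le_compat_r; nra).
      nra. }
    assert (c * f <= p * q).
    { apply sq_le; try nra.
      replace (p * q * (p * q)) with ((p*p)*(q*q)) by ring. rewrite Hp, Hq.
      replace (c*d*(e*f)) with ((c*f)*(d*e)) by ring.
      apply Rmult_le_compat_l; nra. }
    nra.
Qed.

Lemma key (c d e f p q m1 m2 : R) : 0 <= c -> 0 <= d -> 0 <= e -> 0 <= f ->
  0 <= p -> 0 <= q -> p * p = c * d -> q * q = e * f -> 0 <= m1 -> 0 <= m2 ->
  m1 <= c + f -> m1 <= d + e -> m2 <= c + e -> m2 <= d + f ->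
  m1 * m2 <= (p + q) * (p + q).
Proof.
  intros. destruct (Rle_dec (c+f) (d+e)); destruct (Rle_dec (c+e) (d+f)).
  - pose proof (core c d e f p q). assert (m1*m2 <= (c+f)*(c+e)) by nra. nra.
  - pose proof (core f e d c q p). assert (m1*m2 <= (f+c)*(f+d)) by nra.
    assert (q*q = f*e) by lra. assert (p*p = d*c) by lra. nra.
  - pose proof (core e f c d q p). assert (m1*m2 <= (e+d)*(e+c)) by nra.
    assert (q*q = e*f) by lra. assert (p*p = c*d) by lra. nra.
  - pose proof (core d c f e p q). assert (m1*m2 <= (d+e)*(d+f)) by nra.
    assert (q*q = f*e) by lra. assert (p*p = d*c) by lra. nra.
Qed.

Theorem lemma3p4 (K : R) (r : nat -> nat -> R)
  (hK : 1 <= K)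
  (hnn : forall i j, idx4 i -> idx4 j -> 0 <= r i j)
  (hsym : forall i j, idx4 i -> idx4 j -> r i j = r j i)
  (htri : forall i j k, idx4 i -> idx4 j -> idx4 k ->
            r i j <= K * (r i k + r j k)) :
  sqrt (r 1%nat 2%nat * r 3%nat 4%nat)
    <= K * (sqrt (r 1%nat 3%nat * r 2%nat 4%nat) + sqrt (r 1%nat 4%nat * r 2%nat 3%nat))
  /\ r 1%nat 2%nat * r 3%nat 4%nat
       <= 2 * K ^ 2 * (r 1%nat 3%nat * r 2%nat 4%nat + r 1%nat 4%nat * r 2%nat 3%nat)
  /\ 2 * K ^ 2 * (r 1%nat 3%nat * r 2%nat 4%nat + r 1%nat 4%nat * r 2%nat 3%nat)
       <= (2 * K) ^ 2 * Rmax (r 1%nat 3%nat * r 2%nat 4%nat) (r 1%nat 4%nat * r 2%nat 3%nat).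
Proof.
  assert (i1 : idx4 1) by (unfold idx4; lia).
  assert (i2 : idx4 2) by (unfold idx4; lia).
  assert (i3 : idx4 3) by (unfold idx4; lia).
  assert (i4 : idx4 4) by (unfold idx4; lia).
  pose proof (htri 1 2 3 i1 i2 i3)%nat as t1.
  pose proof (htri 1 2 4 i1 i2 i4)%nat as t2.
  pose proof (htri 3 4 1 i3 i4 i1)%nat as t3.
  pose proof (htri 3 4 2 i3 i4 i2)%nat as t4.
  rewrite (hsym 3 1)%nat, (hsym 4 1)%nat in t3 by auto.
  rewrite (hsym 2 3)%nat in t1 by auto.
  rewrite (hsym 2 4)%nat in t2 by auto.
  rewrite (hsym 2 3)%nat, (hsym 2 4)%nat by auto.
  set (a := r 1%nat 2%nat) in *. set (b := r 3%nat 4%nat) in *.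
  set (c := r 1%nat 3%nat) in *. set (d := r 4%nat 2%nat) in *.
  set (e := r 1%nat 4%nat) in *. set (f := r 3%nat 2%nat) in *.
  assert (ha : 0 <= a) by (apply hnn; auto).
  assert (hb : 0 <= b) by (apply hnn; auto).
  assert (hc : 0 <= c) by (apply hnn; auto).
  assert (hd : 0 <= d) by (apply hnn; auto).
  assert (he : 0 <= e) by (apply hnn; auto).
  assert (hf : 0 <= f) by (apply hnn; auto).
  assert (hcd : 0 <= c * d) by nra. assert (hef : 0 <= e * f) by nra.
  pose proof (sqrt_sqrt _ hcd) as Hp. pose proof (sqrt_sqrt _ hef) as Hq.
  pose proof (sqrt_pos (c * d)). pose proof (sqrt_pos (e * f)).
  set (p := sqrt (c * d)) in *. set (q := sqrt (e * f)) in *.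
  assert (hK0 : 0 < K) by lra.
  assert (Hm : (a / K) * (b / K) <= (p + q) * (p + q)).
  { apply (key c d e f p q); auto.
    - apply Rmult_le_pos; [lra | left; apply Rinv_0_lt_compat; lra].
    - apply Rmult_le_pos; [lra | left; apply Rinv_0_lt_compat; lra].
    - apply Rmult_le_reg_l with K; auto. field_simplify; lra.
    - apply Rmult_le_reg_l with K; auto. field_simplify; lra.
    - apply Rmult_le_reg_l with K; auto. field_simplify; lra.
    - apply Rmult_le_reg_l with K; auto. field_simplify; lra. }
  assert (Hab : a * b <= (K * (p + q)) * (K * (p + q))).
  { replace (a * b) with (K * K * ((a / K) * (b / K))) by (field; lra).
    replace ((K * (p + q)) * (K * (p + q))) with (K * K * ((p + q) * (p + q))) by ring.
    apply Rmult_le_compat_l; nra. }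
  split; [|split].
  - rewrite <- (sqrt_square (K * (p + q))) by nra.
    apply sqrt_le_1; nra.
  - assert (2 * (p * q) <= p * p + q * q).
    { pose proof (Rle_0_sqr (p - q)). unfold Rsqr in *. lra. }
    rewrite <- Hp, <- Hq.
    assert ((K * (p + q)) * (K * (p + q)) <= (K*K) * (2 * (p*p + q*q))).
    { replace ((K * (p + q)) * (K * (p + q))) with ((K*K) * ((p+q)*(p+q))) by ring.
      apply Rmult_le_compat_l; nra. }
    replace (2 * K ^ 2 * (p * p + q * q)) with ((K*K) * (2 * (p*p + q*q))) by ring.
    lra.
  - unfold Rmax. destruct (Rle_dec (c * d) (e * f)); simpl; nra.
Qed.
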